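(* Let $p,q$ be distinct positive integers and $n\ge 1$. For every state $x=(x_1,\dots,x_n)\in\{p,q\}^n$, every sequence $s=(s_1,\dots,s_m)$ of elements of $\{p,q\}$ with $m\ge 1$, and every $k\in\{1,\dots,m\}$, $$RLD^{p,q}_n(x, s_{1:m}) = RLD^{p,q}_n(x, s_{1:k}) \circ RLD^{p,q}_n\big(A^{p,q}_n(x, s_{1:k}), s_{k+1:m}\big),$$ where $\circ$ denotes concatenation of finite sequences, $s_{i:j}=(s_i,\dots,s_j)$, and $s_{k+1:m}$ is the empty sequence when $k=m$.
   Context: Let $p,q$ be distinct positive integers. Define $\mathrm{Opp}(p)=q$, $\mathrm{Opp}(q)=p$. For $x\in\{p,q\}$ and a finite sequence $s=(s_1,\dots,s_m)$ of positive integers, the run-length decoding $RLD^{p,q}(x,s)$ is the sequence over $\{p,q\}$ consisting of $s_1$ copies of $x$, followed by $s_2$ copies of $\mathrm{Opp}(x)$, followed by $s_3$ copies of $x$, and so on alternately (so it begins with $x$ and has run lengths $s_1,\dots,s_m$); the decoding of the empty sequence is empty. For $n\ge1$ and $x=(x_1,\dots,x_n)\in\{p,q\}^n$, the $n$-iterated decoding is defined by $RLD^{p,q}_1(x_1,s)=RLD^{p,q}(x_1,s)$ and $RLD^{p,q}_n(x_{1:n},s)=RLD^{p,q}(x_n, RLD^{p,q}_{n-1}(x_{1:n-1},s))$. For a nonempty sequence $t$ over $\{p,q\}$, $\mathrm{OppEnd}(t)=\mathrm{Opp}(\text{last entry of } t)$. The automaton $A^{p,q}_n$ has state set $\{p,q\}^n$;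 for a state $x$ and a nonempty finite sequence $s$ over $\{p,q\}$, $A^{p,q}_n(x,s)\in\{p,q\}^n$ is the state whose $i$-th coordinate is $\mathrm{OppEnd}(RLD^{p,q}_i(x_{1:i},s))$ for $i=1,\dots,n$. *)

(* Defs.v *)
From mathcomp Require Import all_boot.
Set Implicit Arguments. Unset Strict Implicit. Unset Printing Implicit Defensive.

(* Opp over the alphabet {p,q} (values outside are sent to p; never used). *)
Definition Opp (p q x : nat) : nat := if x == p then q else p.

Fixpoint RLD (p q x : nat) (s : seq nat) : seq nat :=
  match s with
  | [::] => [::]
  | a :: s' => nseq a x ++ RLD p q (Opp p q x) s'
  end.

(* n-iterated decoding: RLD_n(x_{1:n}, s) = RLD(x_n, RLD_{n-1}(x_{1:n-1}, s)),
   with xs = [:: x_1; ...; x_n]; RLD_1(x_1,s) = RLD(x_1,s). *)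
Definition RLDn (p q : nat) (xs s : seq nat) : seq nat :=
  foldl (fun t xi => RLD p q xi t) s xs.

(* OppEnd(t) = Opp(last entry of t), meaningful for nonempty t. *)
Definition OppEnd (p q : nat) (t : seq nat) : nat := Opp p q (last 0 t).

(* A_n^{p,q}(x, s): i-th coordinate is OppEnd(RLD_i(x_{1:i}, s)), i = 1..n. *)
Definition Aut (p q : nat) (x s : seq nat) : seq nat :=
  mkseq (fun i => OppEnd p q (RLDn p q (take i.+1 x) s)) (size x).

(* Main.v *)
Require Import Defs.
From mathcomp Require Import all_boot.

Section S.
Variables p q : nat.
Hypothesis hp : 0 < p.
Hypothesis hq : 0 < q.

Lemma Opp_pos x : 0 < Opp p q x.
Proof. by rewrite /Opp; case: ifP. Qed.

Lemma RLD_pos x s : 0 < x -> all (fun y => 0 < y) (RLD p q x s).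
Proof.
elim: s x => [|a s IH] x hx //=.
rewrite all_cat IH ?Opp_pos // andbT.
by apply/allP => y /nseqP [-> _].
Qed.

Lemma RLD_nonempty x a s : 0 < a -> 0 < size (RLD p q x (a :: s)).
Proof. by move=> ha /=; rewrite size_cat size_nseq; case: a ha. Qed.

Lemma RLD_cat x a b : all (fun y => 0 < y) a -> 0 < size a ->
  RLD p q x (a ++ b) = RLD p q x a ++ RLD p q (OppEnd p q (RLD p q x a)) b.
Proof.
elim: a x => [|c a IH] x //= /andP [hc ha] _.
case: a IH ha => [|d a] IH ha.
  rewrite /= cats0 /OppEnd; case: c hc => // c _.
  suff -> : last 0 (nseq c.+1 x) = x by [].
  by rewrite /=; elim: c => //= c ->.
rewrite IH //.
have hne := RLD_nonempty (Opp p q x) d a.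
move: ha => /andP [hd _]; move: (hne hd).
move: (RLD p q (Opp p q x) (d :: a)) => r.
case: r => [|e r] //= _.
by rewrite -catA /OppEnd last_cat.
Qed.

Lemma Aut_cons x1 xs a :
  Aut p q (x1 :: xs) a = OppEnd p q (RLD p q x1 a) :: Aut p q xs (RLD p q x1 a).
Proof. rewrite /Aut /mkseq /= -[1]addn0 iotaDl -map_comp. congr (_ :: _). by rewrite take0. Qed.

Lemma RLDn_cat xs a b : all (fun y => 0 < y) xs ->
  all (fun y => 0 < y) a -> 0 < size a ->
  RLDn p q xs (a ++ b) = RLDn p q xs a ++ RLDn p q (Aut p q xs a) b.
Proof.
elim: xs a b => [|x1 xs IH] a b; first by [].
move=> /andP [hx hxs] ha hsa.
rewrite Aut_cons.
change (RLDn p q xs (RLD p q x1 (a ++ b)) = RLDn p q xs (RLD p q x1 a) ++ RLDn p q (Aut p q xs (RLD p q x1 a)) (RLD p q (OppEnd p q (RLD p q x1 a)) b)).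
rewrite RLD_cat // IH //; first exact: RLD_pos.
case: a ha hsa => [|c a] //= /andP [hc _] _.
by rewrite size_cat size_nseq; case: c hc.
Qed.

End S.

Theorem proposition1 (p q n : nat) (x s : seq nat) (k : nat) :
  0 < p -> 0 < q -> p != q -> 1 <= n ->
  size x = n -> all (fun y => (y == p) || (y == q)) x ->
  1 <= size s -> all (fun y => (y == p) || (y == q)) s ->
  1 <= k <= size s ->
  RLDn p q x s =
    RLDn p q x (take k s) ++ RLDn p q (Aut p q x (take k s)) (drop k s).
Proof.
move=> hp hq _ _ _ hx _ hs /andP [hk hks].
have pos : forall t, all (fun y => (y == p) || (y == q)) t -> all (fun y => 0 < y) t.
  move=> t /allP H; apply/allP => y /H /orP [] /eqP -> //.
rewrite -RLDn_cat //; first by rewrite cat_take_drop.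
- exact: pos.
- by apply: pos; rewrite -(cat_take_drop k s) all_cat in hs; case/andP: hs.
- by rewrite size_take; case: ifP => // _; apply: leq_trans hk hks.
Qed.
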